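(* Let $(X,d)$ be a complete generalized metric space and let $T,S:X\to X$ be mappings such that $T$ is continuous, one-to-one and subsequentially convergent. Suppose there is $\lambda\in[0,\tfrac12)$ such that \[ d(TSx,TSy)\le \lambda\big[d(Tx,TSx)+d(Ty,TSy)\big] \] for all $x,y\in X$. Then $S$ has a unique fixed point. Moreover, if $T$ is sequentially convergent, then for every $x_0\in X$ the sequence of iterates $\{S^n x_0\}$ converges to this fixed point.
   Context: A generalized metric space (in the sense of Branciari) is a nonempty set $X$ with a map $d:X\times X\to\mathbb{R}$ such that: (i) $d(x,y)\ge 0$ for all $x,y\in X$, and $d(x,y)=0$ iff $x=y$; (ii) $d(x,y)=d(y,x)$ for all $x,y\in X$; (iii) (rectangular property) $d(x,y)\le d(x,w)+d(w,z)+d(z,y)$ for all $x,y\in X$ and all distinct points $w,z\in X\setminus\{x,y\}$. A sequence $\{x_n\}$ in $X$ converges to $x\in X$ if $d(x_n,x)\to 0$; it is Cauchy if $d(x_n,x_m)\to 0$ as $n,m\to\infty$; $(X,d)$ is complete if every Cauchy sequence converges. $T:X\to X$ is continuous if $x_n\to x$ implies $Tx_n\to Tx$. A mapping $T:X\to X$ is called sequentially convergent if for every sequence $\{y_n\}$ in $X$, convergence of $\{Ty_n\}$ implies convergence of $\{y_n\}$; $T$ is called subsequentially convergent if for every sequence $\{y_n\}$ in $X$, convergence of $\{Ty_n\}$ implies that $\{y_n\}$ has a convergent subsequence. *)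

(* Defs.v *)
From Stdlib Require Import Reals.
Open Scope R_scope.

Definition is_gen_metric {X : Type} (d : X -> X -> R) : Prop :=
  (forall x y, 0 <= d x y) /\
  (forall x y, d x y = 0 <-> x = y) /\
  (forall x y, d x y = d y x) /\
  (forall x y w z, w <> z -> w <> x -> w <> y -> z <> x -> z <> y ->
     d x y <= d x w + d w z + d z y).

Definition gm_converges_to {X : Type} (d : X -> X -> R) (u : nat -> X) (x : X) : Prop :=
  Un_cv (fun n => d (u n) x) 0.

Definition gm_convergent {X : Type} (d : X -> X -> R) (u : nat -> X) : Prop :=
  exists x, gm_converges_to d u x.

Definition gm_cauchy {X : Type} (d : X -> X -> R) (u : nat -> X) : Prop :=
  forall eps, eps > 0 -> exists N, forall n m, (n >= N)%nat -> (m >= N)%nat ->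
    d (u n) (u m) < eps.

Definition gm_complete {X : Type} (d : X -> X -> R) : Prop :=
  forall u, gm_cauchy d u -> gm_convergent d u.

Definition gm_continuous {X : Type} (d : X -> X -> R) (T : X -> X) : Prop :=
  forall u x, gm_converges_to d u x -> gm_converges_to d (fun n => T (u n)) (T x).

Definition seq_convergent_map {X : Type} (d : X -> X -> R) (T : X -> X) : Prop :=
  forall y : nat -> X, gm_convergent d (fun n => T (y n)) -> gm_convergent d y.

Definition subseq_convergent_map {X : Type} (d : X -> X -> R) (T : X -> X) : Prop :=
  forall y : nat -> X, gm_convergent d (fun n => T (y n)) ->
    exists phi : nat -> nat, (forall n m, (n < m)%nat -> (phi n < phi m)%nat) /\
      gm_convergent d (fun n => y (phi n)).

Fixpoint iter_map {X : Type} (S : X -> X) (n : nat) (x : X) : X :=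
  match n with O => x | Datatypes.S k => S (iter_map S k x) end.

(* Main.v *)
Require Import Defs.
From Stdlib Require Import Reals.
From Stdlib Require Import Lra Lia Psatz Classical.
Open Scope R_scope.

Lemma cv_get (u : nat -> R) : Un_cv u 0 -> (forall n, 0 <= u n) ->
  forall e, e > 0 -> exists N, forall n, (n >= N)%nat -> u n < e.
Proof.
  intros H Hn e He. destruct (H e He) as [N HN]. exists N. intros n Hn'.
  specialize (HN n Hn'). unfold R_dist in HN. rewrite Rminus_0_r, Rabs_pos_eq in HN; auto.
Qed.

Lemma cv_mk (u : nat -> R) : (forall n, 0 <= u n) ->
  (forall e, e > 0 -> exists N, forall n, (n >= N)%nat -> u n < e) -> Un_cv u 0.
Proof.
  intros Hn H e He. destruct (H e He) as [N HN]. exists N. intros n Hn'.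
  unfold R_dist. rewrite Rminus_0_r, Rabs_pos_eq; auto.
Qed.

Lemma strict_ge (phi : nat -> nat) :
  (forall n m, (n < m)%nat -> (phi n < phi m)%nat) -> forall n, (n <= phi n)%nat.
Proof.
  intros H n. induction n. lia. specialize (H n (S n) ltac:(lia)). lia.
Qed.

Lemma eventually_neq (X : Type) (y : nat -> X) (Hinj : forall m n, y m = y n -> m = n) (p : X) :
  exists N, forall n, (N <= n)%nat -> y n <> p.
Proof.
  destruct (classic (exists j, y j = p)) as [[j Hj]|Hn].
  - exists (S j). intros n Hn E. assert (n = j) by (apply Hinj; congruence). lia.
  - exists 0%nat. intros n _ E. apply Hn; eauto.
Qed.

Lemma rect_bound (X : Type) (d : X -> X -> R) (Hm : is_gen_metric d) (y : nat -> X)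
  (Hinj : forall m n, y m = y n -> m = n) (p q : X) :
  exists N, forall n, (n >= N)%nat -> d p q <= d p (y n) + d (y n) (y (S n)) + d (y (S n)) q.
Proof.
  destruct (eventually_neq X y Hinj p) as [Np HNp].
  destruct (eventually_neq X y Hinj q) as [Nq HNq].
  exists (Nat.max Np Nq). intros n Hn.
  destruct Hm as (_ & _ & _ & Hr). apply Hr.
  - intro E. apply Hinj in E. lia.
  - apply HNp. lia.
  - apply HNq. lia.
  - apply HNp. lia.
  - apply HNq. lia.
Qed.

Lemma lim_unique (X : Type) (d : X -> X -> R) (Hm : is_gen_metric d) (y : nat -> X)
  (Hinj : forall m n, y m = y n -> m = n)
  (Ha : forall e, e > 0 -> exists N, forall n, (n >= N)%nat -> d (y n) (y (S n)) < e)
  (p q : X) : gm_converges_to d y p -> gm_converges_to d y q -> p = q.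
Proof.
  intros Hp Hq. destruct (classic (p = q)) as [|Hne]; auto. exfalso.
  pose proof Hm as (Hnn & Hz & Hs & _).
  assert (HD : d p q > 0).
  { destruct (Hnn p q); auto. exfalso. apply Hne. apply Hz. auto. }
  destruct (rect_bound X d Hm y Hinj p q) as [N0 H0].
  destruct (cv_get _ Hp (fun n => Hnn _ _) (d p q / 3) ltac:(lra)) as [N1 H1].
  destruct (cv_get _ Hq (fun n => Hnn _ _) (d p q / 3) ltac:(lra)) as [N3 H3].
  destruct (Ha (d p q / 3) ltac:(lra)) as [N2 H2].
  set (n := (N0 + N1 + N2 + N3)%nat).
  specialize (H0 n ltac:(unfold n; lia)). specialize (H1 n ltac:(unfold n; lia)).
  specialize (H2 n ltac:(unfold n; lia)). specialize (H3 (S n) ltac:(unfold n; lia)).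
  cbv beta in H1, H3. rewrite (Hs p (y n)) in H0. lra.
Qed.

Lemma step (X : Type) (d : X -> X -> R) (T S : X -> X) (lam : R)
  (Hcon : forall x y, d (T (S x)) (T (S y)) <= lam * (d (T x) (T (S x)) + d (T y) (T (S y))))
  (x : nat -> X) (Hx : forall n, x (Datatypes.S n) = S (x n)) :
  forall n, (1 - lam) * d (T (x (Datatypes.S n))) (T (x (Datatypes.S (Datatypes.S n)))) <= lam * d (T (x n)) (T (x (Datatypes.S n))).
Proof.
  intros n. pose proof (Hcon (x n) (x (Datatypes.S n))) as H. rewrite <- !Hx in H. lra.
Qed.

Lemma orbit_facts (X : Type) (d : X -> X -> R) (T S : X -> X) (lam : R)
  (Hm : is_gen_metric d) (HTi : forall x y, T x = T y -> x = y)
  (Hl0 : 0 <= lam) (Hl1 : lam < 1/2)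
  (Hcon : forall x y, d (T (S x)) (T (S y)) <= lam * (d (T x) (T (S x)) + d (T y) (T (S y))))
  (x : nat -> X) (Hx : forall n, x (Datatypes.S n) = S (x n)) :
  (exists m, S (x m) = x m) \/
  ((forall m n, T (x m) = T (x n) -> m = n) /\
   (forall e, e > 0 -> exists N, forall n, (n >= N)%nat -> d (T (x n)) (T (x (Datatypes.S n))) < e)).
Proof.
  pose proof Hm as (Hnn & Hz & Hs & _).
  set (a := fun n => d (T (x n)) (T (x (Datatypes.S n)))).
  set (k := lam / (1 - lam)).
  assert (Hk0 : 0 <= k) by (unfold k; apply Rmult_le_pos; [lra|apply Rlt_le, Rinv_0_lt_compat; lra]).
  assert (Hk1 : k < 1).
  { unfold k. apply (Rmult_lt_reg_l (1 - lam)); [lra|]. field_simplify; lra. }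
  assert (Hst : forall n, a (Datatypes.S n) <= k * a n).
  { intros n. apply (Rmult_le_reg_l (1 - lam)); [lra|].
    replace ((1 - lam) * (k * a n)) with (lam * a n) by (unfold k; field; lra).
    apply (step X d T S lam Hcon x Hx). }
  assert (Ha0 : forall n, 0 <= a n) by (intros; apply Hnn).
  assert (Hgeo : forall n, a n <= k ^ n * a 0%nat).
  { induction n. simpl; lra. simpl. specialize (Hst n).
    apply Rle_trans with (k * a n); auto. rewrite Rmult_assoc. apply Rmult_le_compat_l; auto. }
  destruct (classic (exists m, a m = 0)) as [[m Hm0]|Hnz].
  - left. exists m. apply HTi. rewrite <- Hx. symmetry. apply Hz. exact Hm0.
  - right. assert (Hpos : forall n, a n > 0).
    { intros n. destruct (Ha0 n); auto. exfalso; apply Hnz; eauto. }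
    assert (Hdec : forall n, a (Datatypes.S n) <= a n).
    { intros n. specialize (Hst n). specialize (Ha0 n). nra. }
    assert (Hstr : forall n, a (Datatypes.S n) < a n).
    { intros n. specialize (Hst n). specialize (Hpos n). nra. }
    assert (Hmono : forall m j, a (Datatypes.S m + j)%nat <= a (Datatypes.S m)).
    { intros m j. induction j. rewrite Nat.add_0_r; lra.
      replace (Datatypes.S m + Datatypes.S j)%nat with (Datatypes.S (Datatypes.S m + j)) by lia. specialize (Hdec (Datatypes.S m + j)%nat). lra. }
    assert (Heqa : forall m n, T (x m) = T (x n) -> a m = a n).
    { intros m n E. apply HTi in E. unfold a. rewrite !Hx, E. reflexivity. }
    split.
    + intros m n E. destruct (Nat.lt_trichotomy m n) as [Hlt|[Heq|Hgt]]; auto; exfalso.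
      * pose proof (Heqa m n E). replace n with (Datatypes.S m + (n - Datatypes.S m))%nat in H by lia.
        pose proof (Hmono m (n - Datatypes.S m)%nat). pose proof (Hstr m). lra.
      * symmetry in E. pose proof (Heqa n m E). replace m with (Datatypes.S n + (m - Datatypes.S n))%nat in H by lia.
        pose proof (Hmono n (m - Datatypes.S n)%nat). pose proof (Hstr n). lra.
    + intros e He.
      destruct (pow_lt_1_zero k ltac:(rewrite Rabs_pos_eq; lra) (e / (a 0%nat + 1))) as [N HN].
      { apply Rdiv_lt_0_compat; [lra| specialize (Ha0 0%nat); lra]. }
      exists N. intros n Hn. specialize (HN n Hn). rewrite Rabs_pos_eq in HN by (apply pow_le; lra).
      change (a n < e).
      apply Rle_lt_trans with (k ^ n * a 0%nat); auto.
      assert (k ^ n * (a 0%nat + 1) < e).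
      { apply (Rmult_lt_compat_r (a 0%nat + 1)) in HN; [|specialize (Ha0 0%nat); lra].
        replace (e / (a 0%nat + 1) * (a 0%nat + 1)) with e in HN by (field; specialize (Ha0 0%nat); lra).
        exact HN. }
      assert (0 <= k ^ n) by (apply pow_le; lra). nra.
Qed.

Theorem theorem2p4 (X : Type) (d : X -> X -> R) (T S : X -> X) (lambda : R) :
  inhabited X -> is_gen_metric d -> gm_complete d ->
  gm_continuous d T -> (forall x y, T x = T y -> x = y) ->
  subseq_convergent_map d T ->
  0 <= lambda -> lambda < 1/2 ->
  (forall x y, d (T (S x)) (T (S y)) <= lambda * (d (T x) (T (S x)) + d (T y) (T (S y)))) ->
  (exists! z, S z = z) /\
  (seq_convergent_map d T ->
     forall z, S z = z -> forall x0, gm_converges_to d (fun n => iter_map S n x0) z).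
Proof.
  intros [x0] Hm Hc HTc HTi Hsub Hl0 Hl1 Hcon.
  pose proof Hm as (Hnn & Hz & Hs & _).
  assert (Huniq : forall z w, S z = z -> S w = w -> z = w).
  { intros z w Ez Ew. apply HTi. apply Hz. apply Rle_antisym; [|apply Hnn].
    pose proof (Hcon z w) as H. rewrite Ez, Ew in H.
    assert (d (T z) (T z) = 0) by (apply Hz; auto).
    assert (d (T w) (T w) = 0) by (apply Hz; auto). nra. }
  split.
  - cut (exists z, S z = z).
    { intros [z Hz']. exists z. split; auto. }
    pose (x := fun n => iter_map S n x0).
    assert (Hx : forall n, x (Datatypes.S n) = S (x n)) by reflexivity.
    destruct (orbit_facts X d T S lambda Hm HTi Hl0 Hl1 Hcon x Hx) as [[m Hmf]|[Hinj Ha]].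
    { eauto. }
    assert (Hcau : gm_cauchy d (fun n => T (x n))).
    { intros eps He. destruct (Ha eps He) as [N HN]. exists (Datatypes.S N).
      intros n m Hn Hm'. destruct n as [|n']; [lia|]. destruct m as [|m']; [lia|].
      pose proof (Hcon (x n') (x m')) as H. rewrite <- !Hx in H.
      specialize (HN n' ltac:(lia)) as H1. specialize (HN m' ltac:(lia)) as H2.
      assert (0 <= d (T (x n')) (T (x (Datatypes.S n')))) by apply Hnn.
      assert (0 <= d (T (x m')) (T (x (Datatypes.S m')))) by apply Hnn.
      nra. }
    destruct (Hsub (fun n => x n) (Hc _ Hcau)) as [phi [Hphi [z Hzc]]].
    exists z.
    pose proof (HTc _ _ Hzc) as HTz. simpl in HTz.
    destruct (classic (T z = T (S z))) as [E|Hne].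
    { symmetry. apply HTi. exact E. }
    exfalso.
    set (D := d (T z) (T (S z))).
    assert (HD : D > 0).
    { destruct (Hnn (T z) (T (S z))); auto. exfalso. apply Hne. apply Hz. auto. }
    assert (Hinj' : forall m n, T (x m) = T (x n) -> m = n) by exact Hinj.
    destruct (rect_bound X d Hm (fun n => T (x n)) Hinj' (T z) (T (S z))) as [N0 H0].
    destruct (cv_get _ HTz (fun n => Hnn _ _) ((1 - lambda) * D / 4)) as [N1 H1].
    { apply Rdiv_lt_0_compat; [|lra]. apply Rmult_lt_0_compat; lra. }
    destruct (Ha ((1 - lambda) * D / 8)) as [N2 H2].
    { apply Rdiv_lt_0_compat; [|lra]. apply Rmult_lt_0_compat; lra. }
    set (n := (N0 + N1 + N2)%nat).
    pose proof (strict_ge phi Hphi n) as Hge.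
    set (m := phi n) in *.
    specialize (H0 m ltac:(unfold n in *; lia)). specialize (H1 n ltac:(unfold n; lia)).
    specialize (H2 m ltac:(unfold n in *; lia)). simpl in H0, H1.
    pose proof (Hcon (x m) z) as H3. rewrite <- Hx in H3. fold D in H3, H0.
    rewrite (Hs (T z)) in H0.
    assert (0 <= d (T (x m)) (T (x (Datatypes.S m)))) by apply Hnn.
    unfold m in *. nra.
  - intros Hseq z Ez x0'.
    pose (x := fun n => iter_map S n x0').
    assert (Hx : forall n, x (Datatypes.S n) = S (x n)) by reflexivity.
    change (gm_converges_to d x z).
    destruct (orbit_facts X d T S lambda Hm HTi Hl0 Hl1 Hcon x Hx) as [[m Hmf]|[Hinj Ha]].
    + assert (Exm : x m = z) by (apply Huniq; auto).
      assert (Hall : forall j, x (m + j)%nat = z).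
      { induction j. rewrite Nat.add_0_r; auto.
        replace (m + Datatypes.S j)%nat with (Datatypes.S (m + j)) by lia. rewrite Hx, IHj; auto. }
      apply cv_mk; [intros; apply Hnn|]. intros e He. exists m. intros n Hn.
      replace n with (m + (n - m))%nat by lia. rewrite Hall.
      assert (d z z = 0) by (apply Hz; auto). lra.
    + assert (Hyz : gm_converges_to d (fun n => T (x n)) (T z)).
      { apply cv_mk; [intros; apply Hnn|]. intros e He.
        destruct (Ha e He) as [N HN]. exists (Datatypes.S N). intros n Hn.
        destruct n as [|n']; [lia|]. simpl.
        pose proof (Hcon (x n') z) as H. rewrite <- Hx, Ez in H.
        assert (d (T z) (T z) = 0) by (apply Hz; auto).
        specialize (HN n' ltac:(lia)).
        assert (0 <= d (T (x n')) (T (x (Datatypes.S n')))) by apply Hnn.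
        nra. }
      destruct (Hseq x (ex_intro _ (T z) Hyz)) as [w Hw].
      pose proof (HTc _ _ Hw) as HTw.
      assert (T w = T z).
      { apply (lim_unique X d Hm (fun n => T (x n)) Hinj Ha); auto. }
      apply HTi in H. subst w. exact Hw.
Qed.
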